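(* Let $G=(V,E)$ be a graph, and let $\varepsilon>0$ satisfy $2\varepsilon|E|<1$. Construct the following instance of \textsc{HET-EF1}: the goods are the vertices $V$; there is an agent $0$ with $v_0(u)=1$ for every $u\in V$, and for each edge $e=(u_j,u_k)\in E$ an agent $e$ with $v_e(u_j)=v_e(u_k)=\varepsilon$ and $v_e(u)=0$ for $u\notin\{u_j,u_k\}$. Then for every integer $t\ge0$, the maximum independent set of $G$ has size $t$ if and only if the optimal value $\mathrm{OPT}$ of the constructed instance satisfies $t\le\mathrm{OPT}<t+1$.
   Context: \textsc{HET-EF1}: given agents with additive (possibly different) valuations $v_i:2^{[m]}\to\mathbb{R}_{\ge0}$ over a set of $m$ goods, maximize $\sum_i v_i(S_i)$ over all allocations (ordered partitions of the goods, parts may be empty) $(S_i)_i$ that are $\mathrm{EF1}$: for all agents $i,j$ with $S_j\ne\emptyset$ there is $g\in S_j$ with $v_i(S_i)\ge v_i(S_j)-v_i(g)$. Valuations are additive: $v_i(S)=\sum_{g\in S}v_i(g)$. *)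

(* Defs.v *)
From HB Require Import structures.
From mathcomp Require Import all_boot all_order all_algebra.
Set Implicit Arguments. Unset Strict Implicit. Unset Printing Implicit Defensive.
Import Order.TTheory GRing.Theory Num.Theory.
Local Open Scope ring_scope.

(* A graph on the finite vertex type V is given by its edge set
   E : {set {set V}}, each edge being a 2-element set of vertices. *)

(* Agents of the constructed instance: None = agent 0, Some e = the agent of
   edge e (only meaningful for e \in E). *)
Definition agent (V : finType) := option {set V}.

Definition is_agent (V : finType) (E : {set {set V}}) (a : agent V) : bool :=
  if a is Some e then e \in E else true.

Definition val (R : realFieldType) (V : finType) (eps : R) (a : agent V) (g : V) : R :=
  match a with
  | None => 1
  | Some e => if g \in e then eps else 0
  end.

Definition valS (R : realFieldType) (V : finType) (eps : R) (a : agent V) (S : {set V}) : R :=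
  \sum_(g in S) val eps a g.

Definition bundle (V : finType) (f : {ffun V -> agent V}) (a : agent V) : {set V} :=
  [set g | f g == a].

Definition valid_alloc (V : finType) (E : {set {set V}}) (f : {ffun V -> agent V}) : bool :=
  [forall g, is_agent E (f g)].

Definition EF1b (R : realFieldType) (V : finType) (E : {set {set V}}) (eps : R)
    (f : {ffun V -> agent V}) : bool :=
  [forall i : agent V, forall j : agent V,
     (is_agent E i && is_agent E j && (bundle f j != set0)) ==>
     [exists g in bundle f j,
        valS eps i (bundle f i) >= valS eps i (bundle f j) - val eps i g]].

Definition welfare (R : realFieldType) (V : finType) (E : {set {set V}}) (eps : R)
    (f : {ffun V -> agent V}) : R :=
  valS eps None (bundle f None) + \sum_(e in E) valS eps (Some e) (bundle f (Some e)).

(* OPT: maximum welfare over EF1 allocations (the maximum is taken with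
   identity 0; all welfares are nonnegative and EF1 allocations exist). *)
Definition OPT (R : realFieldType) (V : finType) (E : {set {set V}}) (eps : R) : R :=
  \big[Num.max/0]_(f : {ffun V -> agent V} | valid_alloc E f && EF1b E eps f)
     welfare E eps f.

Definition independent (V : finType) (E : {set {set V}}) (S : {set V}) : bool :=
  [forall e in E, ~~ (e \subset S)].

Definition mis_size (V : finType) (E : {set {set V}}) : nat :=
  \max_(S : {set V} | independent E S) #|S|.

(* Main.v *)
Require Import Defs.
From HB Require Import structures.
From mathcomp Require Import all_boot all_order all_algebra.
Import Order.TTheory GRing.Theory Num.Theory.
Local Open Scope ring_scope.

Section H.
Variables (R : realFieldType) (V : finType) (E : {set {set V}}) (eps : R).
Hypothesis hE : forall e, e \in E -> #|e| = 2%N.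
Hypothesis heps : 0 < eps.

Lemma val_ge0 (a : agent V) (g : V) : 0 <= Defs.val eps a g.
Proof. case: a => [e|] /=; last exact: ler01. by case: ifP => _ //; exact: ltW. Qed.

Lemma valS_ge0 (a : agent V) (S : {set V}) : 0 <= valS eps a S.
Proof. by apply: sumr_ge0 => g _; apply: val_ge0. Qed.

Lemma valS_None (S : {set V}) : valS eps None S = #|S|%:R.
Proof. by rewrite /valS /= sumr_const. Qed.

Lemma valS_Some (e S : {set V}) : valS eps (Some e) S = #|S :&: e|%:R * eps.
Proof.
rewrite /valS /= -big_mkcondr /= (eq_bigl (fun g => g \in S :&: e)).
  by rewrite sumr_const mulr_natl.
by move=> g; rewrite inE.
Qed.

Lemma val_le (a : agent V) (g : V) : a <> None -> Defs.val eps a g <= eps.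
Proof. case: a => [e|] //= _. by case: ifP => _ //; exact: ltW. Qed.

Hypothesis hsmall : 2 * eps * (#|E|)%:R < 1.

Lemma indep_S0 (f : {ffun V -> agent V}) :
  EF1b E eps f -> independent E (bundle f None).
Proof.
move=> hf; apply/forall_inP => e eE; apply/negP => sub.
have e2 := hE e eE.
have ne : bundle f None != set0.
  apply/set0Pn; have : (0 < #|e|)%N by rewrite e2.
  case/card_gt0P => x xe; exists x; exact: (subsetP sub).
move/forallP: hf => /(_ (Some e)) /forallP /(_ None).
rewrite /= eE ne /= => /exists_inP [g gS].
rewrite !valS_Some.
have -> : bundle f (Some e) :&: e = set0.
  apply/setP => x; rewrite !inE; apply/negP => /andP [/eqP fx xe].
  by move: (subsetP sub x xe); rewrite inE fx.
have -> : bundle f None :&: e = e by apply/setIidPr.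
rewrite cards0 e2 mul0r subr_le0 => h.
have := le_trans h (val_le (Some e) g ltac:(discriminate)).
by rewrite mulr_natl mulr2n gerDl leNgt heps.
Qed.

Lemma welfare_lt (f : {ffun V -> agent V}) :
  welfare E eps f < #|bundle f None|%:R + 1.
Proof.
rewrite /welfare valS_None ltrD2l.
apply: (le_lt_trans _ hsmall).
apply: (@le_trans _ _ (\sum_(e in E) (2 * eps))).
  apply: ler_sum => e eE; rewrite valS_Some ler_pM2r //.
  rewrite -[2]/(2%N%:R) -(hE e eE) ler_nat; apply: subset_leq_card; exact: subsetIr.
by rewrite sumr_const mulr_natr.
Qed.


Variable I : {set V}.
Hypothesis hI : independent E I.
Hypothesis hmax : forall S, independent E S -> (#|S| <= #|I|)%N.

Definition f0 : {ffun V -> agent V} :=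
  [ffun u => if u \in I then None else [pick e in E | (u \in e) && (e :&: I != set0)]].

Lemma pick_ex u : u \notin I -> exists2 e, e \in E & (u \in e) && (e :&: I != set0).
Proof.
move=> uI.
have : ~~ independent E (u |: I).
  apply/negP => /hmax; rewrite cardsU1 uI /=; by rewrite ltnn.
rewrite /independent; case/forall_inPn => e eE /negPn sub.
have : ~~ (e \subset I) by move/forall_inP: hI => /(_ e eE).
case/subsetPn => x xe xI.
have := subsetP sub x xe; rewrite !inE (negbTE xI) orbF => /eqP xu; subst x.
exists e => //; rewrite xe /=.
have : (0 < #|e :\ u|)%N by move: (hE e eE); rewrite (cardsD1 u e) xe add1n => -[->].
case/card_gt0P => w; rewrite !inE => /andP [wu we].
apply/set0Pn; exists w; rewrite inE we /=.
by have := subsetP sub w we; rewrite !inE (negbTE wu).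
Qed.

Lemma f0_notI u : u \notin I -> exists2 e, f0 u = Some e & [/\ e \in E, u \in e & e :&: I != set0].
Proof.
move=> uI; rewrite /f0 ffunE (negbTE uI).
case: pickP => [e /andP [eE /andP [ue eI]]|none]; first by exists e.
by case: (pick_ex u uI) => e eE P; move: (none e); rewrite /= eE P.
Qed.

Lemma bundle0 : bundle f0 None = I.
Proof.
apply/setP => u; rewrite inE; case uI: (u \in I).
  by rewrite /f0 ffunE uI.
by case: (f0_notI u (negbT uI)) => e ->.
Qed.

Lemma bundleS e g : g \in bundle f0 (Some e) -> bundle f0 (Some e) = [set g].
Proof.
have key : forall x, x \in bundle f0 (Some e) -> [/\ x \notin I, x \in e, e \in E & e :&: I != set0].
  move=> x; rewrite inE; case xI: (x \in I); first by rewrite /f0 ffunE xI.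
  by case: (f0_notI x (negbT xI)) => e' -> [e'E xe' e'I] /eqP [<-].
move=> gS; case: (key g gS) => gI ge eE /set0Pn [w]; rewrite inE => /andP [we wI].
have : #|e :\ w| == 1%N.
  by move: (hE e eE); rewrite (cardsD1 w e) we add1n => -[->].
case/cards1P => y hy.
have memy : forall z, z \in e -> z \notin I -> z = y.
  move=> z ze zI; apply/set1P; rewrite -hy !inE ze andbT.
  by apply/negP => /eqP zw; move: zI; rewrite zw wI.
apply/setP => x; rewrite inE; apply/idP/idP; last by move/eqP ->.
move=> xS; case: (key x xS) => xI xe _ _.
by rewrite (memy x xe xI) (memy g ge gI).
Qed.

Hypothesis Ine : I != set0.

Lemma f0_EF1 : EF1b E eps f0.
Proof.
apply/forallP => i; apply/forallP => j; apply/implyP => /andP [/andP [ai aj] ne].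
case: j aj ne => [e|] aj ne.
  case/set0Pn: ne => g gS; apply/exists_inP; exists g => //.
  rewrite (bundleS e g gS) /valS big_set1 subrr; exact: valS_ge0.
rewrite bundle0 in ne *; case: i ai => [e|] ai; last first.
  case/set0Pn: ne => g gI; apply/exists_inP; exists g => //.
  by rewrite bundle0 gerBl ler01.
case: (boolP (I :&: e == set0)) => [/eqP h|/set0Pn [w]].
  case/set0Pn: ne => g gI; apply/exists_inP; exists g => //.
  rewrite valS_Some h cards0 mul0r; apply: le_trans (valS_ge0 _ _).
  rewrite subr_le0; exact: val_ge0.
rewrite inE => /andP [wI we]; apply/exists_inP; exists w => //.
rewrite valS_Some /= we; apply: le_trans (valS_ge0 _ _); rewrite subr_le0.
have hp : I :&: e \proper e.
  rewrite properE subsetIr /=; apply/negP => /subsetIP [eI _].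
  by move/forall_inP: hI => /(_ e ai); rewrite eI.
have := proper_card hp; rewrite (hE e ai) ltnS => h1.
by rewrite -[X in _ <= X]mul1r ler_pM2r // lern1.
Qed.

Lemma f0_valid : valid_alloc E f0.
Proof.
apply/forallP => u; case uI: (u \in I); first by rewrite /f0 ffunE uI.
by case: (f0_notI u (negbT uI)) => e -> [].
Qed.

Lemma f0_welfare : #|I|%:R <= welfare E eps f0.
Proof.
rewrite /welfare bundle0 valS_None lerDl; apply: sumr_ge0 => e _; exact: valS_ge0.
Qed.

End H.

Lemma opt_bounds (R : realFieldType) (V : finType) (E : {set {set V}}) (eps : R)
  (hE : forall e, e \in E -> #|e| = 2%N)
  (heps : 0 < eps) (hsmall : 2 * eps * (#|E|)%:R < 1) :
  (mis_size E)%:R <= OPT E eps /\ OPT E eps < (mis_size E)%:R + 1.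
Proof.
have i0 : independent E set0.
  apply/forall_inP => e eE; apply/negP => /subset_leq_card.
  by rewrite (hE e eE) cards0.
have [I hI hIeq] := @eq_bigmax_cond _ (independent E) (fun S : {set V} => #|S|)
   ltac:(apply/card_gt0P; exists set0; exact: i0).
have hmis : mis_size E = #|I| by rewrite /mis_size hIeq.
have hmax : forall S, independent E S -> (#|S| <= #|I|)%N.
  by move=> S hS; rewrite -hmis; exact: (leq_bigmax_cond (F := fun S : {set V} => #|S|)).
split.
  rewrite hmis; case: (boolP (I == set0)) => [/eqP ->|Ine].
    rewrite cards0 /OPT; apply: (big_ind (fun x => 0 <= x)) => //.
      by move=> x y hx hy; rewrite le_max hx.
    move=> f _; rewrite /welfare; apply: addr_ge0; first exact: (valS_ge0 _ _ _ heps).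
    by apply: sumr_ge0 => e _; exact: (valS_ge0 _ _ _ heps).
  rewrite /OPT (bigD1 (f0 V E I)) /=; last first.
    by rewrite (f0_valid _ _ hE _ hI hmax) (f0_EF1 _ _ _ _ hE heps _ hI hmax).
  by rewrite le_max (f0_welfare _ _ _ _ hE heps _ hI hmax).
rewrite /OPT; apply: (big_ind (fun x => x < (mis_size E)%:R + 1)).
- by rewrite ltr_wpDl // ?ler0n ?ltr01.
- by move=> x y hx hy; rewrite gt_max hx hy.
move=> f /andP [_ hf]; apply: lt_le_trans (welfare_lt _ _ _ _ hE heps hsmall f) _.
rewrite lerD2r ler_nat hmis; apply: hmax; exact: (indep_S0 _ _ _ _ hE heps f hf).
Qed.

Theorem lemmaA3 (R : realFieldType) (V : finType) (E : {set {set V}}) (eps : R)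
  (hE : forall e, e \in E -> #|e| = 2%N)
  (heps : 0 < eps) (hsmall : 2 * eps * (#|E|)%:R < 1) (t : nat) :
  mis_size E = t <-> ((t%:R <= OPT E eps) && (OPT E eps < t%:R + 1)).
Proof.
have [h1 h2] := opt_bounds _ _ _ _ hE heps hsmall.
split; first by move=> <-; rewrite h1 h2.
case/andP => h3 h4; apply/eqP; rewrite eqn_leq.
have a := le_lt_trans h1 h4; have b := le_lt_trans h3 h2.
rewrite natr1 ltr_nat ltnS in a; rewrite natr1 ltr_nat ltnS in b.
by rewrite a b.
Qed.
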